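(* Let $\Pi=(\mathsf A,\mathsf B)$ and $\Pi'=(\mathsf C,\mathsf D)$ be two $m$-round protocols with $\chi_\Pi\equiv\chi_{\Pi'}$, and let $\mathcal F$ be a frontier of nodes. Assume that $\mathrm{SD}(L_\Pi,L_{\Pi'})\le\varepsilon$, $\Pr_{\ell\leftarrow L_\Pi}[\ell\in\mathcal L_1(\Pi)\mid \ell\in\mathrm{desc}(\mathcal F)]\le\alpha$ and $\Pr_{\ell\leftarrow L_{\Pi'}}[\ell\in\mathcal L_1(\Pi)\mid \ell\in\mathrm{desc}(\mathcal F)]\ge\beta$, for some $\varepsilon>0$ and $0\le\alpha<\beta\le1$. Then $\Pr_{\ell\leftarrow L_\Pi}[\ell\in\mathrm{desc}(\mathcal F)]\le\varepsilon\cdot\frac{1+\beta}{\beta-\alpha}$.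
   Context: An $m$-round single-bit-message protocol is identified with the complete binary tree of height $m$ (nodes are binary strings of length at most $m$, leaves have length $m$); $e_\Pi(u,ub)$ is the probability the next bit is $b$ given transcript $u$, $L_\Pi$ is the distribution of the leaf (full transcript) of a random execution, and $\chi_\Pi$ maps each leaf to the common output in $\{0,1\}$. $\mathcal L_1(\Pi)=\{\ell:\chi_\Pi(\ell)=1\}$. $\mathrm{desc}(\mathcal F)$ is the set of nodes having an ancestor (possibly itself) in $\mathcal F$. A frontier is a set of nodes no one of which is a proper descendant of another. $\mathrm{SD}$ is statistical distance. *)

(* Defs.v *)
From mathcomp Require Import all_boot all_order all_algebra.
Set Implicit Arguments. Unset Strict Implicit. Unset Printing Implicit Defensive.
Import Order.TTheory GRing.Theory Num.Theory.
Local Open Scope ring_scope.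

(* Nodes of the complete binary tree of height m are binary strings
   (seq bool) of length <= m; leaves are m.-tuple bool. *)

(* An m-round single-bit-message protocol, as far as its execution
   distribution is concerned: e u b = probability that the next bit is b
   given the partial transcript u  (e_Pi(u, ub)). *)
Definition protocol (R : numDomainType) := seq bool -> bool -> R.

Definition valid_protocol (R : numDomainType) (m : nat) (e : protocol R) :=
  forall u : seq bool, (size u < m)%N ->
    (forall b, 0 <= e u b) /\ e u false + e u true = 1.

Definition leaf_dist (R : numDomainType) (m : nat) (e : protocol R)
  (l : m.-tuple bool) : R :=
  \prod_(i < m) e (take i l) (tnth l i).

Definition Pr (R : numDomainType) (m : nat) (L : m.-tuple bool -> R)
  (A : pred (m.-tuple bool)) : R :=
  \sum_(l : m.-tuple bool | A l) L l.

(* Conditional probability Pr[A | B] (taken to be 0 if Pr[B] = 0). *)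
Definition condPr (R : numFieldType) (m : nat) (L : m.-tuple bool -> R)
  (A B : pred (m.-tuple bool)) : R :=
  Pr L (predI A B) / Pr L B.

Definition SD (R : numFieldType) (m : nat) (L L' : m.-tuple bool -> R) : R :=
  2^-1 * \sum_(l : m.-tuple bool) `|L l - L' l|.

Definition is_prefix (u v : seq bool) : bool := prefix u v.

Definition frontier (m : nat) (F : pred (seq bool)) : Prop :=
  (forall u, F u -> (size u <= m)%N) /\
  (forall u v, F u -> F v -> is_prefix u v -> u = v).

(* desc(F) restricted to leaves: leaves having an ancestor (possibly
   itself) in F. *)
Definition in_desc (m : nat) (F : pred (seq bool)) : pred (m.-tuple bool) :=
  fun l => [exists i : 'I_m.+1, F (take i l)].

Definition L1 (m : nat) (chi : m.-tuple bool -> bool) : pred (m.-tuple bool) :=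
  fun l => chi l.
Arguments leaf_dist {R} m e l.

(* Main.v *)
Require Import Defs.
From mathcomp Require Import all_boot all_order all_algebra zify ring lra.
Import Order.TTheory GRing.Theory Num.Theory.
Local Open Scope ring_scope.

Lemma sum_tupleS (R : numDomainType) k (G : k.+1.-tuple bool -> R) :
  \sum_(t : k.+1.-tuple bool) G t =
  \sum_(b : bool) \sum_(t : k.-tuple bool) G [tuple of b :: t].
Proof.
rewrite pair_big /=.
rewrite (reindex (fun p : bool * k.-tuple bool => [tuple of p.1 :: p.2])) //=.
exists (fun t : k.+1.-tuple bool => (thead t, [tuple of behead t])) => [[b t]|t] _ /=.
  by congr pair; apply: val_inj.
by rewrite [in RHS](tuple_eta t); apply: val_inj.
Qed.

Lemma mass_gen (R : numDomainType) m (e : protocol R) :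
  valid_protocol m e -> forall k u, (size u + k <= m)%N ->
  \sum_(t : k.-tuple bool) \prod_(i < k) e (u ++ take i t) (tnth t i) = 1.
Proof.
move=> He; elim=> [|k IH] u Hs.
  under eq_bigr do rewrite big_ord0.
  by rewrite sumr_const card_tuple expn0.
rewrite sum_tupleS big_bool /=.
have [_ H1] := He u ltac:(lia).
have E : forall b, \sum_(t : k.-tuple bool)
    \prod_(i < k.+1) e (u ++ take i [tuple of b :: t]) (tnth [tuple of b :: t] i)
    = e u b.
  move=> b; rewrite -[RHS]mulr1 -[X in _ * X](IH (rcons u b)); last by rewrite size_rcons; lia.
  rewrite mulr_sumr; apply: eq_bigr => t _; rewrite big_ord_recl /=.
  congr (_ * _); first by rewrite cats0 (tnth_nth false).
  apply: eq_bigr => i _.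
  by rewrite /bump /= -cats1 -catA /= (tnth_nth false) (tnth_nth false).
by rewrite !E addrC.
Qed.

Lemma mass (R : numDomainType) m (e : protocol R) :
  valid_protocol m e -> \sum_(l : m.-tuple bool) leaf_dist m e l = 1.
Proof.
move=> He; rewrite -(@mass_gen _ _ _ He m [::]) //.
Qed.

Lemma leaf_ge0 (R : numDomainType) m (e : protocol R) l :
  valid_protocol m e -> 0 <= leaf_dist m e l.
Proof.
move=> He; apply: prodr_ge0 => i _; have [H _] := He (take i l) ltac:(by rewrite size_take size_tuple ltn_ord).
exact: H.
Qed.

Lemma ev_le (R : realFieldType) m (L L' : m.-tuple bool -> R) E :
  \sum_l L l = \sum_l L' l -> Pr L' E - Pr L E <= SD L L'.
Proof.
move=> Hs; rewrite /Pr /SD -sumrB.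
set f := fun l => L' l - L l.
have H0 : \sum_l f l = 0 by rewrite /f sumrB Hs subrr.
rewrite (bigID E) /= in H0.
have Ha : \sum_(l | E l) f l <= \sum_(l | E l) `|L l - L' l|.
  by apply: ler_sum => l _; rewrite distrC ler_norm.
have Hb : - \sum_(l | ~~ E l) f l <= \sum_(l | ~~ E l) `|L l - L' l|.
  rewrite -sumrN; apply: ler_sum => l _; rewrite distrC -normrN; exact: ler_norm.
rewrite [X in _ <= _ * X](bigID E) /=.
have -> : \sum_(l | E l) (L' l - L l) = \sum_(l | E l) f l by [].
have E1 : \sum_(l | ~~ E l) f l = - \sum_(l | E l) f l.
  by apply/eqP; rewrite -addr_eq0 addrC H0.
rewrite E1 opprK in Hb.
set a := \sum_(l | E l) f l in Ha Hb *.
set x := \sum_(l | E l) _ in Ha *; set y := \sum_(l | ~~ E l) _ in Hb *.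
lra.
Qed.

Theorem proposition2p8 (R : realFieldType) (m : nat)
  (e e' : protocol R) (chi : m.-tuple bool -> bool)
  (F : pred (seq bool)) (eps alpha beta : R) :
  valid_protocol m e -> valid_protocol m e' ->
  frontier m F ->
  0 < eps -> 0 <= alpha -> alpha < beta -> beta <= 1 ->
  SD (leaf_dist m e) (leaf_dist m e') <= eps ->
  condPr (leaf_dist m e) (L1 chi) (in_desc F) <= alpha ->
  condPr (leaf_dist m e') (L1 chi) (in_desc F) >= beta ->
  Pr (leaf_dist m e) (in_desc F) <= eps * ((1 + beta) / (beta - alpha)).
Proof.
move=> He He' _ Heps Ha Hab Hb1 HSD.
rewrite /condPr.
set P := leaf_dist m e; set Q := leaf_dist m e'.
have Hs : \sum_l P l = \sum_l Q l by rewrite /P /Q !mass.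
have Hs' : \sum_l Q l = \sum_l P l by [].
have HSD' : SD Q P <= eps.
  rewrite /SD; under eq_bigr do rewrite distrC; exact: HSD.
have d1 := @ev_le _ _ _ _ (predI (L1 chi) (in_desc F)) Hs.
have d2 := @ev_le _ _ _ _ (in_desc F) Hs'.
have p0 : 0 <= Pr P (in_desc F) by apply: sumr_ge0 => l _; exact: leaf_ge0.
have q0 : 0 <= Pr Q (in_desc F) by apply: sumr_ge0 => l _; exact: leaf_ge0.
set a := Pr P _ in d1 *; set b := Pr Q _ in d1 *.
set p := Pr P _ in p0 d2 *; set q := Pr Q _ in q0 d2 *.
move=> Hap Hbq.
have bm : 0 < beta - alpha by rewrite subr_gt0.
rewrite mulrA ler_pdivlMr //.
have [pz|pp] := eqVneq p 0.
  rewrite pz mul0r; apply: mulr_ge0; lra.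
have {}pp : 0 < p by rewrite lt0r pp.
have [qz|qp] := eqVneq q 0.
  by move: Hbq; rewrite qz invr0 mulr0; lra.
have {}qp : 0 < q by rewrite lt0r qp.
rewrite ler_pdivrMr // in Hap.
rewrite ler_pdivlMr // in Hbq.
nra.
Qed.
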